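(* Let $\mathcal{K}$ be a finite simplicial complex with a fixed total order on its vertex set, and let $(\Lambda_S,d_S)$ be its stories algebra with the differential $d_S$ described below. Then $\mathcal{I}=\bigoplus_{n\ge1}(\mathcal{I}_N^n\oplus\mathcal{I}_S^n)$ is a differential ideal of $\Lambda_S$: it is a two-sided ideal and $d_S(\mathcal{I}^n)\subseteq\mathcal{I}^{n+1}$ for all $n$, where $\mathcal{I}^n=\mathcal{I}_N^n\oplus\mathcal{I}_S^n$.
   Context: A (finite abstract) simplicial complex $\mathcal{K}$ on a finite non-empty vertex set $V$ is a collection of non-empty subsets of $V$ (simplices) containing every singleton $\{v\}$, $v\in V$, and closed under taking non-empty subsets. $\dim P=|P|-1$. For a simplex $P=\{v_0,\ldots,v_n\}$ listed in increasing order of the fixed vertex order, the incidence coefficient is $\epsilon_{v_iP}=(-1)^i$. Stories: a homogeneous $n$-story is a sequence $\langle P_0,\ldots,P_n\rangle$ of simplices of $\mathcal{K}$ with $P_{i-1}\neq P_i$ for $i=1,\ldots,n$; $\Lambda_S=\bigoplus_{n\ge0}\Lambda_S^n$ where $\Lambda_S^n$ is the complex vector space with basis the homogeneous $n$-stories, with product $\langle P_0,\ldots,P_n\rangle\cdot\langle Q_0,\ldots,Q_m\rangle=\langle P_0,\ldots,P_n,Q_1,\ldots,Q_m\rangle$ if $P_n=Q_0$ and $0$ otherwise. The differential $d_S:\Lambda_S^n\to\Lambda_S^{n+1}$ is the linear map with $d_S\langle P_0,\ldots,P_n\rangle=\sum_{Q\neq P_0}\langle Q,P_0,\ldots,P_n\rangle+\sum_{k=1}^n(-1)^k\sum_{Q:\,P_{k-1}\neq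 Q\neq P_k}\langle P_0,\ldots,P_{k-1},Q,P_k,\ldots,P_n\rangle+(-1)^{n+1}\sum_{Q\neq P_n}\langle P_0,\ldots,P_n,Q\rangle$ (sums over simplices $Q$ of $\mathcal{K}$). A story $\langle P_0,\ldots,P_n\rangle$ is fair if for every $i=1,\ldots,n$ there is a vertex $v_i\in P_i$ with $P_{i-1}=P_i\setminus\{v_i\}$, and unfair otherwise; for a fair story $w$ put $\epsilon_w=\prod_{i=1}^n\epsilon_{v_iP_i}$. $\mathcal{I}_N^n$ is the span of all unfair homogeneous $n$-stories. $\mathcal{I}_S^n$ is the span of all differences $\epsilon_w w-\epsilon_{w'}w'$ where $w=\langle P_0,P_1,\ldots,P_{n-1},P_n\rangle$ and $w'=\langle P_0,P_1',\ldots,P_{n-1}',P_n\rangle$ are fair $n$-stories with the same initial simplex $P_0$ and the same final simplex $P_n$ (so $P_0\subseteq P_n$ and $\dim P_n-\dim P_0=n$). *)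

(* Defs.v *)
From HB Require Import structures.
From mathcomp Require Import all_boot all_order all_algebra.
From mathcomp Require Import reals.
From mathcomp.real_closed Require Import complex.
Set Implicit Arguments. Unset Strict Implicit. Unset Printing Implicit Defensive.
Import Order.TTheory GRing.Theory Num.Theory.
Local Open Scope ring_scope.

Section Stories.
Variables (d : Order.disp_t) (V : finOrderType d) (R : realType).
Local Notation C := (R[i]).
Local Notation simplex := {set V}.
Local Notation story := (seq simplex).

(* the (homogeneous) vector space Lambda_S is represented by formal finite
   linear combinations of stories; two formal sums denote the same vector
   iff they have the same coefficient functions [cf]. *)
Definition fsum := seq (C * story).

Definition cf (x : fsum) (w : story) : C := \sum_(p <- x | p.2 == w) p.1.

Definition scale_fsum (a : C) (x : fsum) : fsum := [seq (a * p.1, p.2) | p <- x].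

Definition lincomb (cs : seq (C * fsum)) : fsum :=
  flatten [seq scale_fsum c.1 c.2 | c <- cs].

Definition simplicial_complex (K : {set simplex}) : Prop :=
  [/\ set0 \notin K, (forall v : V, [set v] \in K) &
      (forall P Q : simplex, P \in K -> Q \subset P -> Q != set0 -> Q \in K)].

Fixpoint nostutter (w : story) : bool :=
  match w with
  | P :: ((Q :: _) as t) => (P != Q) && nostutter t
  | _ => true
  end.

Definition is_story (K : {set simplex}) (w : story) : bool :=
  [&& w != [::], all (fun P => P \in K) w & nostutter w].

Definition is_nstory (K : {set simplex}) (n : nat) (w : story) : bool :=
  is_story K w && (size w == n.+1).

Definition in_Lambda (K : {set simplex}) (x : fsum) : bool :=
  all (is_story K) [seq p.2 | p <- x].

Definition glue (u w : story) : story := u ++ behead w.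
Definition mulS (x y : fsum) : fsum :=
  [seq (p.1 * q.1, glue p.2 q.2) | p <- x, q <- [seq q <- y | last set0 p.2 == head set0 q.2]].

(* differential on a single story <P_0,...,P_n>: inserting Q at position k
   (0 <= k <= n+1) with sign (-1)^k, Q different from its neighbours *)
Definition ins_ok (w : story) (k : nat) (Q : simplex) : bool :=
  ((k == 0%N) || (Q != nth set0 w k.-1)) && ((k == size w) || (Q != nth set0 w k)).

Definition dS1 (K : {set simplex}) (w : story) : fsum :=
  flatten [seq [seq ((-1) ^+ k, take k w ++ Q :: drop k w) | Q <- enum K & ins_ok w k Q]
          | k <- iota 0 (size w).+1].

Definition dS (K : {set simplex}) (x : fsum) : fsum :=
  flatten [seq scale_fsum p.1 (dS1 K p.2) | p <- x].

Fixpoint fair (w : story) : bool :=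
  match w with
  | P :: ((Q :: _) as t) => [exists v in Q, P == Q :\ v] && fair t
  | _ => true
  end.

(* incidence coefficient eps_{vP} = (-1)^i, i = position of v in P *)
Definition eps_vP (v : V) (P : simplex) : C := (-1) ^+ #|[set u in P | (u < v)%O]|.

Definition eps_step (P Q : simplex) : C :=
  if [pick v in Q :\: P] is Some v then eps_vP v Q else 1.

Fixpoint eps_w (w : story) : C :=
  match w with
  | P :: ((Q :: _) as t) => eps_step P Q * eps_w t
  | _ => 1
  end.

Definition genN (K : {set simplex}) (n : nat) (g : fsum) : Prop :=
  exists w, [/\ is_nstory K n w, ~~ fair w & g = [:: (1, w)]].

Definition genS (K : {set simplex}) (n : nat) (g : fsum) : Prop :=
  exists w w', [/\ is_nstory K n w && is_nstory K n w', fair w && fair w',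
    head set0 w = head set0 w', last set0 w = last set0 w' &
    g = [:: (eps_w w, w); (- eps_w w', w')]].

Definition genI (K : {set simplex}) (n : nat) (g : fsum) : Prop :=
  (1 <= n)%N /\ (genN K n g \/ genS K n g).

Definition in_span (G : fsum -> Prop) (x : fsum) : Prop :=
  exists cs : seq (C * fsum), (forall c, c \in cs -> G c.2) /\ cf x =1 cf (lincomb cs).

Definition In (K : {set simplex}) (n : nat) (x : fsum) : Prop := in_span (genI K n) x.
Definition Iall (K : {set simplex}) (x : fsum) : Prop :=
  in_span (fun g => exists n, genI K n g) x.

End Stories.

(* Main.v *)
Require Import Defs.
From HB Require Import structures.
From mathcomp Require Import all_boot all_order all_algebra.
From mathcomp Require Import reals.
From mathcomp.real_closed Require Import complex.
From mathcomp Require Import ring zify.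
Set Implicit Arguments. Unset Strict Implicit. Unset Printing Implicit Defensive.
Import Order.TTheory GRing.Theory Num.Theory.
Local Open Scope ring_scope.

Section Lin.
Variables (d : Order.disp_t) (V : finOrderType d) (R : realType).
Local Notation C := (R[i]).
Local Notation simplex := {set V}.
Local Notation story := (seq simplex).
Local Notation fs := (fsum V R).

Lemma cf_nil (w : story) : cf ([::] : fs) w = 0.
Proof. by rewrite /cf big_nil. Qed.

Lemma cf_cons (p : C * story) (x : fs) w :
  cf (p :: x) w = (if p.2 == w then p.1 else 0) + cf x w.
Proof. by rewrite /cf big_cons; case: ifP; rewrite ?add0r. Qed.

Lemma cf_cat (x y : fs) w : cf (x ++ y) w = cf x w + cf y w.
Proof. by rewrite /cf big_cat. Qed.

Lemma cf_scale a (x : fs) w : cf (scale_fsum a x) w = a * cf x w.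
Proof.
rewrite /cf /scale_fsum big_map mulr_sumr; apply: eq_bigr => //.
Qed.

Lemma cf_flatten (xs : seq fs) w : cf (flatten xs) w = \sum_(x <- xs) cf x w.
Proof. by rewrite /cf big_flatten. Qed.

Lemma cf_lincomb (cs : seq (C * fs)) w :
  cf (lincomb cs) w = \sum_(c <- cs) c.1 * cf c.2 w.
Proof. by rewrite /lincomb cf_flatten big_map; apply: eq_bigr => c _; rewrite cf_scale. Qed.

Lemma cf_single (a : C) (s : story) w : cf ([:: (a, s)] : fs) w = if s == w then a else 0.
Proof. by rewrite cf_cons cf_nil addr0. Qed.

Definition lsum (g : story -> C) (x : fs) := \sum_(p <- x) p.1 * g p.2.

Lemma lsum_supp (g : story -> C) (x : fs) (S : seq story) :
  uniq S -> {subset [seq p.2 | p <- x] <= S} ->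
  lsum g x = \sum_(s <- S) cf x s * g s.
Proof.
move=> uS; elim: x => [|p x IH] sub.
  by rewrite /lsum big_nil big1 // => s _; rewrite cf_nil mul0r.
rewrite /lsum big_cons -/(lsum g x) IH; last first.
  by move=> s hs; apply: sub; rewrite inE hs orbT.
have pS : p.2 \in S by apply: sub; rewrite inE eqxx.
rewrite [RHS](eq_bigr (fun s => (if p.2 == s then p.1 * g s else 0) + cf x s * g s)); last first.
  by move=> s _; rewrite cf_cons mulrDl; case: ifP; rewrite ?mul0r.
rewrite big_split /=; congr (_ + _).
rewrite -big_mkcond /= (eq_bigl (pred1 p.2)); last by move=> s; rewrite /= eq_sym.
by rewrite -big_filter filter_pred1_uniq // big_seq1.
Qed.

Lemma lsum_cf (g : story -> C) (x y : fs) : cf x =1 cf y -> lsum g x = lsum g y.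
Proof.
move=> e.
set S := undup ([seq p.2 | p <- x] ++ [seq p.2 | p <- y]).
have uS : uniq S by apply: undup_uniq.
rewrite (@lsum_supp g x S) //; last by move=> s hs; rewrite mem_undup mem_cat hs.
rewrite (@lsum_supp g y S) //; last by move=> s hs; rewrite mem_undup mem_cat hs orbT.
by apply: eq_bigr => s _; rewrite e.
Qed.

Lemma lsum_lincomb (g : story -> C) cs :
  lsum g (lincomb cs) = \sum_(c <- cs) c.1 * lsum g c.2.
Proof.
rewrite /lsum /lincomb big_flatten big_map; apply: eq_bigr => c _.
rewrite /scale_fsum big_map mulr_sumr; apply: eq_bigr => p _ /=; by rewrite mulrA.
Qed.

Lemma span_cf (G : fs -> Prop) x y : cf x =1 cf y -> in_span G y -> in_span G x.
Proof. by move=> e [cs [h1 h2]]; exists cs; split => // w; rewrite e h2. Qed.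

Lemma span_gen (G : fs -> Prop) g : G g -> in_span G g.
Proof.
move=> Gg; exists [:: (1, g)]; split; first by move=> c; rewrite inE => /eqP ->.
by move=> w; rewrite cf_lincomb big_seq1 mul1r.
Qed.

Lemma span_sum (G : fs -> Prop) (T : eqType) (r : seq T) (P : pred T)
   (a : T -> C) (zf : T -> fs) (z : fs) :
  (forall t, t \in r -> P t -> in_span G (zf t)) ->
  (forall w, cf z w = \sum_(t <- r | P t) a t * cf (zf t) w) ->
  in_span G z.
Proof.
move=> hz ez.
have [cs [hcs ecs]] : exists cs : seq (C * fs), (forall c, c \in cs -> G c.2) /\
  forall w, \sum_(t <- r | P t) a t * cf (zf t) w = cf (lincomb cs) w.
  elim: r hz {ez} => [|t r IH] hz.
    by exists [::]; split => // w; rewrite big_nil /lincomb /= cf_nil.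
  have [cs [h1 h2]] := IH (fun t' ht' => hz t' (@mem_behead _ (t :: r) _ ht')).
  case Pt: (P t); last first.
    by exists cs; split => // w; rewrite big_cons Pt h2.
  have [ds [h3 h4]] := hz t (mem_head _ _) Pt.
  exists ([seq (a t * c.1, c.2) | c <- ds] ++ cs); split.
    move=> c; rewrite mem_cat => /orP [/mapP [c' hc' ->]|hc]; [exact: (h3 _ hc')|exact: (h1 _ hc)].
  move=> w; rewrite big_cons Pt h2 h4 /lincomb map_cat flatten_cat cf_cat.
  congr (_ + _); rewrite -/(lincomb ds) -/(lincomb _) !cf_lincomb big_map mulr_sumr.
  by apply: eq_bigr => c _ /=; rewrite mulrA.
by exists cs; split => // w; rewrite ez ecs.
Qed.

Lemma span0 (G : fs -> Prop) x : cf x =1 (fun _ => 0) -> in_span G x.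
Proof. move=> e; exists [::]; split => // w; by rewrite e /lincomb /= cf_nil. Qed.

Lemma span_lin (G H : fs -> Prop) (x z : fs) (g : story -> story -> C) (op : fs -> fs) :
  in_span G x ->
  (forall y w, cf (op y) w = lsum (g w) y) ->
  (forall c, G c -> in_span H (op c)) ->
  (forall w, cf z w = lsum (g w) x) ->
  in_span H z.
Proof.
move=> [cs [hcs ecs]] eop hop ez.
apply: (@span_sum H _ cs predT (fun c => c.1) (fun c => op c.2)).
  by move=> c hc _; apply: hop; apply: hcs.
move=> w; rewrite ez (lsum_cf _ ecs) lsum_lincomb; apply: eq_bigr => c _.
by rewrite eop.
Qed.

End Lin.
Section Chains.
Variables (d : Order.disp_t) (V : finOrderType d) (R : realType).
Local Notation C := (R[i]).
Local Notation simplex := {set V}.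
Local Notation story := (seq simplex).
Local Notation fs := (fsum V R).
Local Notation eps_w := (@Defs.eps_w _ V R).
Local Notation eps_step := (@Defs.eps_step _ V R).
Local Notation eps_vP := (@Defs.eps_vP _ V R).

Definition chain (e : rel simplex) (l : story) :=
  if l is x :: t then path e x t else true.

Definition hstep (e : rel simplex) (x : simplex) (t : story) :=
  if t is y :: _ then e x y else true.

Lemma chain_cons e x t : chain e (x :: t) = hstep e x t && chain e t.
Proof. by case: t. Qed.

Lemma chain_cat e (a b : story) : chain e (a ++ b) =
  [&& chain e a, chain e b & (nilp a || nilp b || e (last set0 a) (head set0 b))].
Proof.
elim: a => [|x a IH]; first by rewrite /= andbT.
rewrite cat_cons chain_cons IH chain_cons.
case: a IH => [|y a] IH /=.
  by case: b {IH} => [|z b] //=; rewrite ?andbT // andbC.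
by rewrite -!andbA.
Qed.

Lemma chain_ins e (a b : story) Q : chain e (a ++ Q :: b) =
  [&& chain e a, chain e b, (nilp a || e (last set0 a) Q) & (nilp b || e Q (head set0 b))].
Proof.
rewrite chain_cat chain_cons /=.
case: b => [|y b] /=; case: a => [|x a] /=; rewrite ?andbT ?orbF //; [by rewrite andbC|]. by case: (path e x a); case: (e Q y); case: (path e y b); case: (e (last x a) Q).
Qed.

Definition fpair (P Q : simplex) := [exists v in Q, P == Q :\ v].

Lemma fair_cons x t : fair (x :: t) = hstep fpair x t && fair t.
Proof. by case: t. Qed.

Lemma fairE (w : story) : fair w = chain fpair w.
Proof. by elim: w => [|x t IH] //; rewrite fair_cons chain_cons IH. Qed.

Lemma nost_cons x t : nostutter (x :: t) = hstep (fun a b => a != b) x t && nostutter t.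
Proof. by case: t. Qed.

Lemma nostutterE (w : story) : nostutter w = chain (fun a b => a != b) w.
Proof. by elim: w => [|x t IH] //; rewrite nost_cons chain_cons IH. Qed.

Definition estep (x : simplex) (t : story) : C :=
  if t is y :: _ then eps_step x y else 1.

Lemma eps_cons x (t : story) : eps_w (x :: t) = estep x t * eps_w t.
Proof. by case: t => //=; rewrite mul1r. Qed.

Lemma eps_cat (a b : story) : eps_w (a ++ b) =
  eps_w a * eps_w b * (if nilp a || nilp b then 1 else eps_step (last set0 a) (head set0 b)).
Proof.
elim: a => [|x a IH]; first by rewrite /= mul1r mulr1.
rewrite cat_cons eps_cons IH eps_cons.
case: a IH => [|y a] IH /=.
  by case: b {IH} => [|z b] //=; rewrite !mul1r ?mulr1 // mulrC.
by rewrite !mulrA.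
Qed.

Lemma sign_sq (e : C) : (exists k : nat, e = (-1) ^+ k) -> e * e = 1.
Proof. by move=> [k ->]; rewrite -exprMn mulrNN mulr1 expr1n. Qed.

Lemma eps_step_sign (P Q : simplex) : exists k : nat, eps_step P Q = (-1) ^+ k.
Proof. rewrite /eps_step; case: pickP => [v _|_]; last by exists 0%N. by eexists. Qed.

Lemma eps_w_sign (w : story) : exists k : nat, eps_w w = (-1) ^+ k.
Proof.
elim: w => [|x t [k IH]]; first by exists 0%N.
rewrite eps_cons IH; case: t IH => [|y t] IH /=; first by exists k; rewrite mul1r.
have [j ->] := eps_step_sign x y; by exists (j + k)%N; rewrite exprD.
Qed.

Lemma eps_step_sq (P Q : simplex) : eps_step P Q * eps_step P Q = 1.
Proof. exact/sign_sq/eps_step_sign. Qed.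

Lemma eps_w_sq w : eps_w w * eps_w w = 1.
Proof. exact/sign_sq/eps_w_sign. Qed.

Lemma fpairP (P Q : simplex) : reflect (exists2 v, v \in Q & P = Q :\ v) (fpair P Q).
Proof.
apply: (iffP existsP) => [[v /andP [hv /eqP e]]|[v hv e]]; first by exists v.
by exists v; rewrite hv e eqxx.
Qed.

Lemma fpair_card (P Q : simplex) : fpair P Q -> #|Q| = #|P|.+1.
Proof. by move=> /fpairP [v hv ->]; rewrite (cardsD1 v Q) hv. Qed.

Lemma fpair_neq (P Q : simplex) : fpair P Q -> Q != P.
Proof. by move=> /fpair_card e; apply/eqP => h; move: e; rewrite h => /n_Sn. Qed.

Lemma fpair_sub (P Q : simplex) : fpair P Q -> P \subset Q.
Proof. by move=> /fpairP [v hv ->]; apply: subsetDl. Qed.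

Lemma fpair_n0 (P Q : simplex) : fpair P Q -> Q != set0.
Proof. by move=> /fpairP [v hv _]; apply/set0Pn; exists v. Qed.

Lemma eps_step_fpair (P Q : simplex) v : v \in Q -> P = Q :\ v -> eps_step P Q = eps_vP v Q.
Proof.
move=> hv ->; rewrite /eps_step; case: pickP => [u|/(_ v)].
  by rewrite !inE => /andP [h1 h2]; move: h1; rewrite h2 andbT negbK => /eqP ->.
by rewrite !inE eqxx hv.
Qed.


Definition cnt (S : simplex) (u : V) := #|[set t in S | (t < u)%O]|.

Lemma cnt_D1 (S : simplex) v u : v \in S -> cnt S u = (cnt (S :\ v) u + (v < u)%O)%N.
Proof.
move=> hv; rewrite /cnt (cardsD1 v) !inE hv /= addnC; congr (_ + _)%N.
by apply: eq_card => t; rewrite !inE andbA.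
Qed.

Arguments cnt_D1 {S v} u.

Lemma eps_vPE v (S : simplex) : eps_vP v S = (-1) ^+ cnt S v.
Proof. by []. Qed.

Lemma two_fill (A B Q0 : simplex) : fpair A Q0 -> fpair Q0 B ->
  exists Q1 Q2, [/\ Q1 != Q2,
    forall Q, (fpair A Q && fpair Q B) = (Q == Q1) || (Q == Q2),
    fpair A Q1 && fpair Q1 B, fpair A Q2 && fpair Q2 B &
    eps_step A Q1 * eps_step Q1 B = - (eps_step A Q2 * eps_step Q2 B)].
Proof.
move=> /fpairP [x hx eA] /fpairP [y hy eQ0].
have hxB : x \in B by move: hx; rewrite eQ0 !inE => /andP [].
have xy : x != y by move: hx; rewrite eQ0 !inE => /andP [].
have hyQ2 : y \in B :\ x by rewrite !inE eq_sym xy.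
have eA2 : A = (B :\ x) :\ y by rewrite eA eQ0 !setDDl setUC.
have f1 : fpair A Q0 && fpair Q0 B.
  by apply/andP; split; apply/fpairP; [exists x|exists y].
have f2 : fpair A (B :\ x) && fpair (B :\ x) B.
  by apply/andP; split; apply/fpairP; [exists y|exists x].
exists Q0, (B :\ x); split => //.
- apply/eqP => e; move: hx; by rewrite e !inE eqxx.
- move=> Q; apply/idP/idP; last first.
    by case/orP => /eqP ->.
  case/andP => /fpairP [p hp eAQ] /fpairP [q hq eQ].
  have [eqy|qy] := eqVneq q y; first by rewrite eQ eqy -eQ0 eqxx.
  have [eqx|qx] := eqVneq q x; first by rewrite eQ eqx eqxx orbT.
  have : q \in A by rewrite eA2 !inE qy qx hq.
  rewrite eAQ eQ !inE eqxx /=; by rewrite andbF.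
- rewrite (eps_step_fpair hx eA) (eps_step_fpair hy eQ0).
  rewrite (eps_step_fpair hyQ2 eA2) (eps_step_fpair hxB (erefl _)).
  rewrite !eps_vPE.
  have e0 : cnt Q0 x = cnt A x by rewrite (cnt_D1 _ hx) -eA ltxx addn0.
  have e1 : cnt B y = (cnt A y + (x < y)%O)%N.
    by rewrite (cnt_D1 _ hy) -eQ0 ltxx addn0 (cnt_D1 _ hx) -eA.
  have e2 : cnt (B :\ x) y = cnt A y.
    by rewrite (cnt_D1 _ hyQ2) -eA2 ltxx addn0.
  have e3 : cnt B x = (cnt A x + (y < x)%O)%N.
    by rewrite (cnt_D1 _ hxB) ltxx addn0 (cnt_D1 _ hyQ2) -eA2.
  rewrite ?e0 e1 e2 e3.
  rewrite !exprD.
  case: (ltgtP x y) xy => [h|h|->]; rewrite ?eqxx //= => _.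
    by rewrite expr0 expr1 !mulr1 !mulrN1 ?mulrN ?opprK (mulrC ((-1) ^+ cnt A x)).
  by rewrite expr0 expr1 !mulr1 !mulrN1 ?mulrN ?opprK (mulrC ((-1) ^+ cnt A x)).
Qed.

End Chains.

Section Stories3.
Variables (d : Order.disp_t) (V : finOrderType d) (R : realType).
Variable K : {set {set V}}.
Hypothesis SC : simplicial_complex K.
Local Notation C := (R[i]).
Local Notation simplex := {set V}.
Local Notation story := (seq simplex).
Local Notation fs := (fsum V R).
Local Notation eps_w := (@Defs.eps_w _ V R).
Local Notation eps_step := (@Defs.eps_step _ V R).
Local Notation estep := (@estep _ V R).
Local Notation dS1 := (@Defs.dS1 _ V R).

Definition ins (w : story) k (Q : simplex) := take k w ++ Q :: drop k w.

Lemma ins_okE (w : story) k Q : (k <= size w)%N -> ins_ok w k Q =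
  (nilp (take k w) || (Q != last set0 (take k w))) &&
  (nilp (drop k w) || (Q != head set0 (drop k w))).
Proof.
move=> hk; rewrite /ins_ok; congr (_ && _).
  case: k hk => [|k] hk; first by rewrite take0.
  rewrite /nilp size_takel // -nth_last size_takel // nth_take //.
rewrite /nilp size_drop -nth0 nth_drop addn0; congr (_ || _).
by rewrite subn_eq0 eqn_leq hk.
Qed.

Lemma story_chain (w : story) : nostutter w = chain (fun a b => a != b) w.
Proof. exact: nostutterE. Qed.

Lemma ins_story n (w : story) k Q : is_nstory K n w -> (k <= size w)%N -> Q \in K ->
  ins_ok w k Q -> is_nstory K n.+1 (ins w k Q).
Proof.
move=> /andP [/and3P [_ aw nw] /eqP sw] hk hQ.
rewrite ins_okE // => /andP [h1 h2].
have ew := cat_take_drop k w.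
apply/andP; split; last by rewrite /ins size_cat /= addnS -size_cat ew sw.
apply/and3P; split.
- by rewrite /ins; case: (take k w).
- by rewrite /ins all_cat /= hQ /= -all_cat ew aw.
rewrite nostutterE /ins chain_ins; move: nw; rewrite nostutterE -{1}ew chain_cat.
case/and3P => -> -> _ /=; rewrite (eq_sym _ Q) h1 /=; exact: h2.
Qed.

Lemma fair_ins (a b : story) Q : fair (a ++ Q :: b) =
  [&& fair a, fair b, (nilp a || fpair (last set0 a) Q) & (nilp b || fpair Q (head set0 b))].
Proof. by rewrite !fairE chain_ins. Qed.

Lemma fair_cat (a b : story) : fair (a ++ b) =
  [&& fair a, fair b & (nilp a || nilp b || fpair (last set0 a) (head set0 b))].
Proof. by rewrite !fairE chain_cat. Qed.

Lemma eps_ins (a b : story) Q : eps_w (a ++ Q :: b) =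
  eps_w a * eps_w b * (if nilp a then 1 else eps_step (last set0 a) Q) *
  (if nilp b then 1 else eps_step Q (head set0 b)).
Proof.
have e1 : nilp (Q :: b) = false by [].
have e2 : estep Q b = (if nilp b then 1 else eps_step Q (head set0 b)) by clear e1; case: b.
rewrite eps_cat eps_cons e1 e2 orbF /=.
by rewrite -!mulrA; congr (_ * _); rewrite mulrC -mulrA.
Qed.

Lemma span_scale (G : fs -> Prop) (x z : fs) (c : C) :
  in_span G x -> (forall w, cf z w = c * cf x w) -> in_span G z.
Proof.
move=> hx ez; apply: (@span_sum _ _ R G _ [:: tt] predT (fun _ => c) (fun _ => x)).
  by move=> t _ _.
by move=> w; rewrite big_seq1.
Qed.

Lemma span_add (G : fs -> Prop) (x y z : fs) :
  in_span G x -> in_span G y -> (forall w, cf z w = cf x w + cf y w) -> in_span G z.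
Proof.
move=> hx hy ez.
apply: (@span_sum _ _ R G _ [:: true; false] predT (fun _ => 1) (fun b => if b then x else y)).
  by move=> [] _ _.
by move=> w; rewrite !big_cons big_nil !mul1r addr0.
Qed.

Lemma span_mono (G H : fs -> Prop) x : (forall g, G g -> H g) -> in_span G x -> in_span H x.
Proof. by move=> GH [cs [h1 h2]]; exists cs; split => // c /h1 /GH. Qed.

Lemma span1 m (c : C) (s : story) : (1 <= m)%N ->
  (c != 0 -> is_nstory K m s && ~~ fair s) -> in_span (genI K m) [:: (c, s)].
Proof.
move=> hm hc; have [->|c0] := eqVneq c 0.
  by apply: span0 => w; rewrite cf_single; case: ifP.
apply: (@span_scale _ [:: (1, s)] _ c).
  apply: span_gen; split => //; left; exists s; split => //.
    by case/andP: (hc c0).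
  by case/andP: (hc c0).
by move=> w; rewrite !cf_single; case: ifP; rewrite ?mulr1 ?mulr0.
Qed.

Lemma span_pair m (s s' : story) (X X' e : C) : (1 <= m)%N ->
  is_nstory K m s -> is_nstory K m s' -> fair s -> fair s' ->
  head set0 s = head set0 s' -> last set0 s = last set0 s' ->
  eps_w s = e * X -> eps_w s' = e * X' -> e * e = 1 ->
  in_span (genI K m) [:: (X, s); (- X', s')].
Proof.
move=> hm hs hs' fs fs' eh el ex ex' ee.
apply: (@span_scale _ [:: (eps_w s, s); (- eps_w s', s')] _ e).
  apply: span_gen; split => //; right; exists s, s'; split => //.
  - by rewrite hs hs'.
  - by rewrite fs fs'.
move=> w; rewrite !cf_cons cf_nil /= ex ex' !addr0 mulrDr.
by case: ifP; case: ifP; rewrite ?mulr0 ?addr0 ?add0r ?mulrN ?mulrA ?ee ?mul1r.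
Qed.

Lemma cf_map (T : Type) (f : T -> C * story) (l : seq T) v :
  cf [seq f t | t <- l] v = \sum_(t <- l) cf [:: f t] v.
Proof.
elim: l => [|t l IH]; first by rewrite big_nil cf_nil.
by rewrite map_cons big_cons -IH -cat1s cf_cat.
Qed.

Lemma dS1_cf1 (w : story) v : cf (dS1 K w) v =
  \sum_(k <- iota 0 (size w).+1)
     cf ([seq ((-1) ^+ k, ins w k Q) | Q <- enum K & ins_ok w k Q] : fs) v.
Proof. by rewrite /dS1 cf_flatten big_map. Qed.

Lemma dS1_cf2 (w : story) v : cf (dS1 K w) v =
  \sum_(k <- iota 0 (size w).+1) \sum_(Q <- enum K)
     (-1) ^+ k * cf ([:: ((ins_ok w k Q)%:R, ins w k Q)] : fs) v.
Proof.
rewrite dS1_cf1; apply: eq_bigr => k _.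
rewrite cf_map big_filter big_mkcond /=; apply: eq_bigr => Q _.
rewrite !cf_single; case: ifP => _; case: ifP => _ //=; by rewrite ?mulr1 ?mulr0.
Qed.

Lemma dS1_unfair n (w : story) : (1 <= n)%N -> is_nstory K n w -> ~~ fair w ->
  in_span (genI K n.+1) (dS1 K w).
Proof.
move=> hn hw uw.
apply: (@span_sum _ _ R _ _ (iota 0 (size w).+1) predT (fun _ => 1)
  (fun k => [seq ((-1) ^+ k, ins w k Q) | Q <- enum K & ins_ok w k Q])); last first.
  by move=> v; rewrite dS1_cf1; apply: eq_bigr => k _; rewrite mul1r.
move=> k; rewrite mem_iota add0n ltnS => /andP [_ hk] _.
have aw : all (fun P => P \in K) w by case/andP: hw => /and3P [].
apply: (@span_add _
  [seq ((-1) ^+ k, ins w k Q) | Q <- enum K & ins_ok w k Q && fair (ins w k Q)]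
  [seq ((-1) ^+ k, ins w k Q) | Q <- enum K & ins_ok w k Q && ~~ fair (ins w k Q)]); first last.
- by move=> v; rewrite !cf_map !big_filter (bigID (fun Q => fair (ins w k Q))).
- apply: (@span_sum _ _ R _ _ (enum K) (fun Q => ins_ok w k Q && ~~ fair (ins w k Q))
     (fun _ => (-1) ^+ k) (fun Q => [:: (1, ins w k Q)])).
    move=> Q; rewrite mem_enum => hQ /andP [ok uf]; apply: span1 => // _.
    by rewrite ins_story.
  move=> v; rewrite cf_map big_filter; apply: eq_bigr => Q _.
  by rewrite !cf_single; case: ifP; rewrite ?mulr1 ?mulr0.
case: (pickP (fun Q => (Q \in K) && ins_ok w k Q && fair (ins w k Q)))
   => [Q0 /andP [/andP [hQ0 ok0] f0] | none]; last first.
  apply: span0 => v; rewrite cf_map big_filter big1_seq //= => Q /andP [/andP [ok f] hQ].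
  by move: (none Q); rewrite mem_enum in hQ; rewrite hQ ok f.
have ew : take k w ++ drop k w = w := cat_take_drop k w.
have uw2 := uw; rewrite -ew fair_cat in uw2.
move: f0 uw2; rewrite /ins fair_ins.
set a := take k w; set b := drop k w; set A := last set0 a; set B := head set0 b.
case/and4P => fa fb; rewrite fa fb /=.
case na : (nilp a) => //=; case nb : (nilp b) => //= fA fB nAB.
have [Q1 [Q2 [n12 eQ f1 f2 esg]]] := @two_fill _ _ R _ _ _ fA fB.
have hB : B \in K.
  move/allP: aw; apply; rewrite -ew mem_cat; apply/orP; right.
  rewrite -/b /B; case: (b) nb => // y t _; exact: mem_head.
have key : forall Q, (Q \in K) && ins_ok w k Q && fair (ins w k Q) = (Q == Q1) || (Q == Q2).
  move=> Q; rewrite -eQ /ins fair_ins fa fb na nb /=.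
  apply/idP/idP; first by case/andP.
  move=> /andP [p1 p2]; rewrite p1 p2 ins_okE // -/a -/b na nb /= andbT.
  rewrite (fpair_neq p1) eq_sym (fpair_neq p2) andbT.
  rewrite andbT; case: SC => _ _; apply; [exact: hB|exact: fpair_sub|exact: (fpair_n0 p1)].
have epsE : forall Q, eps_w (ins w k Q) = eps_w a * eps_w b * (eps_step A Q * eps_step Q B).
  by move=> Q; rewrite /ins eps_ins -/a -/b na nb mulrA.
have k1 := key Q1; rewrite eqxx /= in k1.
have k2 := key Q2; rewrite eqxx orbT in k2.
move/andP: k1 => [/andP [hQ1 ok1] fQ1]; move/andP: k2 => [/andP [hQ2 ok2] fQ2].
apply: (@span_scale _ [:: (eps_w (ins w k Q1), ins w k Q1); (- eps_w (ins w k Q2), ins w k Q2)]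
   _ ((-1) ^+ k * eps_w (ins w k Q1))).
  apply: span_gen; split => //; right; exists (ins w k Q1), (ins w k Q2); split => //.
  - by rewrite !ins_story.
  - by rewrite fQ1 fQ2.
  - by rewrite /ins -/a; case: (a) na.
  - by rewrite /ins -/b !last_cat /=; case: (b) nb.
move=> v; rewrite cf_map big_filter big_enum_cond /=.
rewrite (eq_bigl (fun Q => (Q == Q1) || (Q == Q2))); last by move=> Q; rewrite andbA key.
rewrite (bigD1 Q1) ?eqxx //= (big_pred1 Q2); last first.
  by move=> Q /=; rewrite andb_orl andbN /= andb_idr // => /eqP ->; rewrite eq_sym.
have e21 : eps_w (ins w k Q2) = - eps_w (ins w k Q1) by rewrite !epsE esg mulrN opprK.
rewrite e21 opprK !cf_cons cf_nil !addr0 /=.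
have ee := @eps_w_sq _ _ R (ins w k Q1).
have h : forall bb : bool, (-1) ^+ k * eps_w (ins w k Q1) *
   (if bb then eps_w (ins w k Q1) else 0) = if bb then (-1) ^+ k else 0.
  by case; rewrite ?mulr0 // -mulrA ee mulr1.
by rewrite mulrDr !h.
Qed.

Lemma span_two (G : fs -> Prop) (p q : C * story) :
  in_span G [:: p] -> in_span G [:: q] -> in_span G [:: p; q].
Proof. by move=> hp hq; apply: span_add hp hq _ => v; rewrite -cat1s cf_cat. Qed.

Lemma span1_ins n (w : story) k Q (c : C) : is_nstory K n w -> (k <= size w)%N -> Q \in K ->
  (ins_ok w k Q -> ~~ fair (ins w k Q)) ->
  in_span (genI K n.+1) [:: (c * (ins_ok w k Q)%:R, ins w k Q)].
Proof.
move=> hw hk hQ hf; apply: span1 => //.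
case ok: (ins_ok w k Q); first by rewrite ins_story // hf.
by rewrite mulr0 eqxx.
Qed.

Lemma mid_unfair (w : story) k Q : fair w -> (0 < k < size w)%N -> ~~ fair (ins w k Q).
Proof.
move=> fw /andP [k0 ks]; apply/negP.
have ew : take k w ++ drop k w = w := cat_take_drop k w.
have na : nilp (take k w) = false by rewrite /nilp size_takel ?(ltnW ks) // eqn0Ngt k0.
have nb : nilp (drop k w) = false by rewrite /nilp size_drop subn_eq0 leqNgt ks.
have fab : fpair (last set0 (take k w)) (head set0 (drop k w)).
  by move: fw; rewrite -{1}ew fair_cat na nb => /and3P [].
rewrite /ins fair_ins na nb /= => /and4P [_ _ f1 f2].
move: (fpair_card fab) (fpair_card f1) (fpair_card f2); lia.
Qed.

Lemma dS_fairpair n (w w' : story) (z : fs) : (1 <= n)%N ->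
  is_nstory K n w -> is_nstory K n w' -> fair w -> fair w' ->
  head set0 w = head set0 w' -> last set0 w = last set0 w' ->
  (forall v, cf z v = eps_w w * cf (dS1 K w) v - eps_w w' * cf (dS1 K w') v) ->
  in_span (genI K n.+1) z.
Proof.
move=> hn hw hw' fw fw' eh el ez.
have sw : size w = n.+1 by case/andP: hw => _ /eqP.
have sw' : size w' = n.+1 by case/andP: hw' => _ /eqP.
apply: (@span_sum _ _ R _ _ [seq (k, Q) | k <- iota 0 n.+2, Q <- enum K] predT
  (fun t => (-1) ^+ t.1)
  (fun t => [:: (eps_w w * (ins_ok w t.1 t.2)%:R, ins w t.1 t.2);
                (- (eps_w w' * (ins_ok w' t.1 t.2)%:R), ins w' t.1 t.2)])); last first.
  move=> v; rewrite ez !dS1_cf2 sw sw' big_allpairs !mulr_sumr -sumrB.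
  apply: eq_bigr => k _; rewrite !mulr_sumr -sumrB; apply: eq_bigr => Q _.
  rewrite !cf_cons !cf_nil /=.
  by case: ifP => _; case: ifP => _; ring.
move=> t /allpairsP [[k' Q] [hk hQ ->]] _ /=.
rewrite mem_iota add0n ltnS in hk; rewrite mem_enum in hQ.
have w0 : w != [::] by rewrite -size_eq0 sw.
have w0' : w' != [::] by rewrite -size_eq0 sw'.
have [->|k0] := eqVneq k' 0%N.
  have eok : forall u : story, u != [::] -> ins_ok u 0 Q = (Q != head set0 u).
    by case.
  rewrite !eok // /ins !take0 !drop0 !cat0s -eh.
  case ok: (Q != head set0 w); last first.
    by apply: span0 => v; rewrite !cf_cons !cf_nil /= !mulr0 oppr0 !if_same !addr0.
  have hs : forall u : story, is_nstory K n u -> head set0 u = head set0 w ->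
      is_nstory K n.+1 (Q :: u).
    move=> u hu hh; have u0 : u != [::] by case/andP: hu => _ /eqP su; rewrite -size_eq0 su.
    have := @ins_story n u 0 Q hu (leq0n _) hQ; rewrite /ins take0 drop0 cat0s; apply.
    by rewrite eok // hh ok.
  have fc : forall u : story, u != [::] -> fair (Q :: u) = fpair Q (head set0 u) && fair u.
    by case.
  case fp: (fpair Q (head set0 w)).
    apply: (@span_pair _ _ _ (eps_w w * 1%:R) (eps_w w' * 1%:R) (eps_step Q (head set0 w))).
    - by [].
    - exact: hs hw (erefl _).
    - exact: hs hw' (esym eh).
    - by rewrite fc // fp fw.
    - by rewrite fc // -eh fp fw'.
    - by [].
    - by move: w0 w0' el; case: (w) => // ? ?; case: (w') => // ? ?.
    - by rewrite eps_cons mulr1; case: (w) w0.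
    - by rewrite eps_cons mulr1 eh; case: (w') w0'.
    - exact: eps_step_sq.
  apply: span_two; apply: span1 => // _.
    by rewrite (hs w hw) // fc // fp.
  by rewrite (hs w' hw') // fc // -eh fp.
have [->|kn] := eqVneq k' n.+1.
  have eok : forall u : story, size u = n.+1 -> ins_ok u n.+1 Q = (Q != last set0 u).
    move=> u su; rewrite ins_okE ?su // take_oversize ?su // drop_oversize ?su //.
    by rewrite /nilp su /= andbT.
  have ei : forall u : story, size u = n.+1 -> ins u n.+1 Q = u ++ [:: Q].
    by move=> u su; rewrite /ins take_oversize ?su // drop_oversize ?su.
  rewrite !eok // !ei // -el.
  case ok: (Q != last set0 w); last first.
    by apply: span0 => v; rewrite !cf_cons !cf_nil /= !mulr0 oppr0 !if_same !addr0.
  have hs : forall u : story, is_nstory K n u -> last set0 u = last set0 w ->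
      is_nstory K n.+1 (u ++ [:: Q]).
    move=> u hu hl; have su : size u = n.+1 by case/andP: hu => _ /eqP.
    rewrite -ei //; apply: ins_story => //; first by rewrite su.
    by rewrite eok // hl ok.
  have fc : forall u : story, u != [::] -> fair (u ++ [:: Q]) = fair u && fpair (last set0 u) Q.
    by move=> u u0; rewrite fair_cat /=; case: (u) u0 => // x t _ /=; rewrite andbT.
  have ec : forall u : story, u != [::] -> eps_w (u ++ [:: Q]) = eps_step (last set0 u) Q * eps_w u.
    by move=> u u0; rewrite eps_cat /= mulr1 mulrC; case: (u) u0.
  case fp: (fpair (last set0 w) Q).
    apply: (@span_pair _ _ _ (eps_w w * 1%:R) (eps_w w' * 1%:R) (eps_step (last set0 w) Q)).
    - by [].
    - exact: hs hw (erefl _).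
    - exact: hs hw' (esym el).
    - by rewrite fc // fp fw.
    - by rewrite fc // -el fp fw'.
    - by move: w0 w0' eh; case: (w) => // ? ?; case: (w') => // ? ?.
    - by rewrite !last_cat.
    - by rewrite ec // mulr1.
    - by rewrite ec // mulr1 el.
    - exact: eps_step_sq.
  apply: span_two; apply: span1 => // _.
    by rewrite (hs w hw) // fc // fp andbF.
  by rewrite (hs w' hw') // fc // -el fp andbF.
have kin : (0 < k' < n.+1)%N by rewrite lt0n k0 ltn_neqAle kn hk.
rewrite -mulNr; apply: span_two; apply: span1_ins => //.
- by rewrite sw.
- by move=> _; apply: mid_unfair; rewrite ?sw.
- by rewrite sw'.
- by move=> _; apply: mid_unfair; rewrite ?sw'.
Qed.

Lemma cf_dS (x : fs) v : cf (dS K x) v = lsum (fun s => cf (dS1 K s) v) x.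
Proof. by rewrite /dS cf_flatten big_map; apply: eq_bigr => p _; rewrite cf_scale. Qed.

Lemma dS_gen n (c : fs) : genI K n c -> in_span (genI K n.+1) (dS K c).
Proof.
move=> [hn [[w [hw uw ->]] | [w [w' [/andP [hw hw'] /andP [fw fw'] eh el ->]]]]].
  apply: (@span_cf _ _ _ _ _ (dS1 K w)); last exact: dS1_unfair.
  by move=> v; rewrite cf_dS /lsum big_seq1 mul1r.
apply: (dS_fairpair hn hw hw' fw fw' eh el) => v.
by rewrite cf_dS /lsum !big_cons big_nil addr0 mulNr.
Qed.

Definition Mk (s t v : story) : C := ((last set0 s == head set0 t) && (glue s t == v))%:R.

Lemma cf_mulS (x y : fs) v : cf (mulS x y) v =
  \sum_(p <- x) \sum_(q <- y) p.1 * q.1 * Mk p.2 q.2 v.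
Proof.
rewrite /mulS cf_flatten big_map; apply: eq_bigr => p _.
rewrite cf_map big_filter big_mkcond; apply: eq_bigr => q _.
rewrite cf_single /Mk /=; case: (last set0 p.2 == head set0 q.2); case: (glue p.2 q.2 == v); by rewrite /= ?mulr1 ?mulr0.
Qed.

Lemma cf_mulS_l (x y : fs) v : cf (mulS x y) v = lsum (fun s => cf (mulS [:: (1, s)] y) v) x.
Proof.
rewrite cf_mulS /lsum; apply: eq_bigr => p _; rewrite cf_mulS big_seq1 mulr_sumr.
by apply: eq_bigr => q _ /=; rewrite mul1r mulrA.
Qed.

Lemma cf_mulS_r (x y : fs) v : cf (mulS x y) v = lsum (fun t => cf (mulS x [:: (1, t)]) v) y.
Proof.
rewrite cf_mulS /lsum exchange_big; apply: eq_bigr => q _; rewrite cf_mulS mulr_sumr.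
by apply: eq_bigr => p _; rewrite big_seq1 /= mulr1 mulrCA mulrA.
Qed.

Lemma chain_glue e (w : story) U u' : w != [::] -> last set0 w = U ->
  chain e (w ++ u') = chain e w && chain e (U :: u').
Proof.
move=> w0 lw; rewrite chain_cat chain_cons lw.
have -> : nilp w = false by case: (w) w0.
case: u' => [|y u'] /=; rewrite ?andbT //; by case: (chain e w); case: (path e y u'); case: (e U y).
Qed.

Lemma glue_props (w u : story) : is_story K w -> is_story K u -> last set0 w = head set0 u ->
  [/\ is_story K (glue w u), size (glue w u) = (size w + (size u).-1)%N,
      fair (glue w u) = fair w && fair u,
      eps_w (glue w u) = eps_w w * eps_w u &
      head set0 (glue w u) = head set0 w /\ last set0 (glue w u) = last set0 u].
Proof.
case/and3P => w0 aw nw; case: u => [|U u'] //; case/and3P => _ au nu lw.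
rewrite /= in lw; change (glue w (U :: u')) with (w ++ u'); split.
- apply/and3P; split.
  + by case: (w) w0.
  + by rewrite all_cat aw; case/andP: au.
  + by rewrite nostutterE (chain_glue _ _ w0 lw) -!nostutterE nw nu.
- by rewrite size_cat.
- by rewrite !fairE (chain_glue _ _ w0 lw).
- rewrite eps_cat eps_cons lw.
  have -> : nilp w = false by case: (w) w0.
  have e2 : estep U u' = (if nilp u' then 1 else eps_step U (head set0 u')) by clear au nu; case: u'.
  rewrite e2 /=; case: (nilp u'); first by rewrite !mulr1 mul1r.
  by rewrite -mulrA (mulrC (eps_w u')).
- split; first by case: (w) w0.
  by rewrite last_cat lw.
Qed.

Definition Gall (g : fs) := exists n, genI K n g.

Lemma spanG m x : in_span (genI K m) x -> in_span Gall x.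
Proof. by apply: span_mono => g hg; exists m. Qed.

Lemma nstory_size n (w : story) : is_nstory K n w -> size w = n.+1.
Proof. by case/andP => _ /eqP. Qed.

Definition gl_ (b : bool) (u w : story) := if b then glue w u else glue u w.
Definition cd_ (b : bool) (u w : story) :=
  if b then last set0 w == head set0 u else last set0 u == head set0 w.

Lemma gen_story (g : fs) u (b : bool) : Gall g -> is_story K u ->
  in_span Gall (if b then mulS g [:: (1, u)] else mulS [:: (1, u)] g).
Proof.
move=> [n [hn gn]] hu.
have hu0 : (0 < size u)%N by case/and3P: hu; case: (u).
have cfm : forall x : fs, forall v, cf (if b then mulS x [:: (1, u)] else mulS [:: (1, u)] x) v =
    \sum_(p <- x) p.1 * (cd_ b u p.2 && (gl_ b u p.2 == v))%:R.
  move=> x v; rewrite /gl_ /cd_; case: b => /=.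
    rewrite cf_mulS; apply: eq_bigr => p _; by rewrite big_seq1 /= mulr1.
  by rewrite cf_mulS big_seq1 /=; apply: eq_bigr => p _; rewrite mul1r.
have props : forall w, is_nstory K n w -> cd_ b u w ->
   [/\ is_nstory K (size (gl_ b u w)).-1 (gl_ b u w), (1 <= (size (gl_ b u w)).-1)%N,
       size (gl_ b u w) = (n.+1 + (size u).-1)%N,
       fair (gl_ b u w) = fair w && fair u & eps_w (gl_ b u w) = eps_w w * eps_w u].
  clear cfm; move=> w hw cw; have sw := nstory_size hw.
  have hws : is_story K w by case/andP: hw.
  rewrite /gl_ /cd_ in cw *; case: b cw => cw.
    have [h1 h2 h3 h4 _] := glue_props hws hu (eqP cw).
    rewrite h2 sw h3 h4; split => //; last by rewrite addSn /= (leq_trans hn) // leq_addr.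
    by rewrite /is_nstory h1 h2 sw /=; apply/eqP; lia.
  have [h1 h2 h3 h4 _] := glue_props hu hws (eqP cw).
  rewrite h2 sw h3 h4 andbC mulrC; split => //.
  - by rewrite /is_nstory h1 h2 sw /=; apply/eqP; lia.
  - lia.
  - lia.
have ends : forall w w', is_nstory K n w -> is_nstory K n w' -> cd_ b u w -> cd_ b u w' ->
   head set0 w = head set0 w' -> last set0 w = last set0 w' ->
   head set0 (gl_ b u w) = head set0 (gl_ b u w') /\ last set0 (gl_ b u w) = last set0 (gl_ b u w').
  clear cfm props; move=> w w' hw hw' cw cw' eh el.
  have hws : is_story K w by case/andP: hw.
  have hws' : is_story K w' by case/andP: hw'.
  rewrite /gl_ /cd_ in cw cw' *; case: b cw cw' => cw cw'.
    have [_ _ _ _ [-> ->]] := glue_props hws hu (eqP cw).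
    by have [_ _ _ _ [-> ->]] := glue_props hws' hu (eqP cw').
  have [_ _ _ _ [-> ->]] := glue_props hu hws (eqP cw).
  by have [_ _ _ _ [-> ->]] := glue_props hu hws' (eqP cw').
case: gn => [[w [hw uw ->]] | [w [w' [/andP [hw hw'] /andP [fw fw'] eh el ->]]]].
  case cw: (cd_ b u w); last first.
    by apply: span0 => v; rewrite cfm big_seq1 cw mulr0.
  have [p1 p2 _ p4 _] := props w hw cw.
  apply: (@span_cf _ _ _ _ _ [:: (1, gl_ b u w)]).
    by move=> v; rewrite cfm big_seq1 cw cf_single /= mul1r; case: ifP.
  apply: (@spanG (size (gl_ b u w)).-1); apply: span_gen; split => //; left; exists (gl_ b u w); split => //.
  by rewrite p4 (negbTE uw).
have ecd : cd_ b u w' = cd_ b u w by rewrite /cd_ eh el.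
have sgl : size (gl_ b u w') = size (gl_ b u w).
  rewrite /gl_; clear props ends cfm ecd; case: b; rewrite /glue !size_cat ?size_behead ?(nstory_size hw) ?(nstory_size hw') //.
case cw: (cd_ b u w); last first.
  by apply: span0 => v; rewrite cfm !big_cons big_nil ecd cw !mulr0 !addr0.
have cw' : cd_ b u w' by rewrite ecd.
have [p1 p2 p3 p4 p5] := props w hw cw.
have [q1 q2 q3 q4 q5] := props w' hw' cw'.
apply: (@span_cf _ _ _ _ _ [:: (eps_w w, gl_ b u w); (- eps_w w', gl_ b u w')]).
  move=> v; rewrite cfm !big_cons big_nil cw cw' !cf_cons cf_nil /= !addr0.
  by case: ifP => _; case: ifP => _; rewrite ?mulr1 ?mulr0.
apply: (@spanG (size (gl_ b u w)).-1).
case fu: (fair u); last first.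
  apply: span_two; apply: span1 => // _.
    by rewrite p1 p4 fu andbF.
  by rewrite -sgl q1 q4 fu andbF.
have [e1 e2] := ends w w' hw hw' cw cw' eh el.
apply: (span_pair (e := eps_w u)) => //.
- by rewrite -sgl.
- by rewrite p4 fw fu.
- by rewrite q4 fw' fu.
- by rewrite p5 mulrC.
- by rewrite q5 mulrC.
- exact: eps_w_sq.
Qed.

End Stories3.

Theorem mainTheorem2 (d : Order.disp_t) (V : finOrderType d) (R : realType)
    (K : {set {set V}}) :
  (0 < #|V|)%N -> simplicial_complex K ->
  (* I is a two-sided ideal of Lambda_S *)
  (forall x y : fsum V R, in_Lambda K x -> in_Lambda K y -> Iall K x ->
      Iall K (mulS x y) /\ Iall K (mulS y x)) /\
  (* d_S (I^n) is contained in I^(n+1) *)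
  (forall (n : nat) (x : fsum V R), in_Lambda K x -> In K n x -> In K n.+1 (dS K x)).
Proof.
move=> _ SC; split.
  move=> x y _ hy hx.
  have sy : forall q, q \in y -> is_story K q.2.
    by move=> q hq; move/allP: hy; apply; apply: map_f.
  split.
    apply: (@span_lin _ _ _ _ _ x (mulS x y) (fun v s => cf (mulS [:: (1, s)] y) v)
                      (fun x => mulS x y) hx).
    - by move=> y' v; apply: cf_mulS_l.
    - move=> c hc.
      apply: (@span_sum _ _ _ _ _ y predT (fun q => q.1) (fun q => mulS c [:: (1, q.2)])).
        move=> q hq _; exact: (@gen_story _ _ _ K c q.2 true hc (sy q hq)).
      by move=> v; rewrite cf_mulS_r.
    - by move=> v; apply: cf_mulS_l.
  apply: (@span_lin _ _ _ _ _ x (mulS y x) (fun v t => cf (mulS y [:: (1, t)]) v)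
                    (fun x => mulS y x) hx).
  - by move=> y' v; apply: cf_mulS_r.
  - move=> c hc.
    apply: (@span_sum _ _ _ _ _ y predT (fun q => q.1) (fun q => mulS [:: (1, q.2)] c)).
      move=> q hq _; exact: (@gen_story _ _ _ K c q.2 false hc (sy q hq)).
    by move=> v; rewrite cf_mulS_l.
  - by move=> v; apply: cf_mulS_r.
move=> n x _ hx.
apply: (@span_lin _ _ _ _ _ x (dS K x) (fun v s => cf (dS1 R K s) v) (dS K) hx).
- by move=> y v; apply: cf_dS.
- by move=> c hc; apply: dS_gen.
- by move=> v; apply: cf_dS.
Qed.
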